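(* Let $(\mathbf{x}^*,\boldsymbol{\lambda}^* )$ be a saddle point of the problem, i.e. $\mathcal{A}(\mathbf{x}^* )=\mathbf{b}$ and $-\mathcal{A}^T(\boldsymbol{\lambda}^* )\in\partial f(\mathbf{x}^* )$, and let $\{\mathbf{x}^k,\mathbf{z}^k,\boldsymbol{\lambda}^k\}$ be generated by the Fast PALM algorithm. Then for every $K>0$, $$f(\mathbf{x}^{K+1})-f(\mathbf{x}^* )+\langle\boldsymbol{\lambda}^*,\mathcal{A}(\mathbf{x}^{K+1})-\mathbf{b}\rangle+\frac12\|\mathcal{A}(\mathbf{x}^{K+1})-\mathbf{b}\|^2\le\frac{2}{(K+2)^2}\Bigl(L\|\mathbf{z}^0-\mathbf{x}^*\|^2+\|\boldsymbol{\lambda}^0-\boldsymbol{\lambda}^*\|^2\Bigr).$$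
   Context: Setting: finite-dimensional real inner product spaces with induced norms $\|\cdot\|$. Problem: $\min_{\mathbf{x}} f(\mathbf{x})=g(\mathbf{x})+h(\mathbf{x})$ subject to $\mathcal{A}(\mathbf{x})=\mathbf{b}$, where $g,h$ are proper convex lower semicontinuous, $g$ is differentiable with $L$-Lipschitz gradient ($L>0$), $\mathcal{A}$ is linear with adjoint $\mathcal{A}^T$. Fast PALM: given $\mathbf{x}^0,\mathbf{z}^0,\boldsymbol{\lambda}^0$ and $\theta^{(0)}=\beta^{(0)}=1$, for $k=0,1,2,\dots$: $\mathbf{y}^{k+1}=(1-\theta^{(k)})\mathbf{x}^k+\theta^{(k)}\mathbf{z}^k$; $\mathbf{z}^{k+1}=\arg\min_{\mathbf{x}}\ \langle\nabla g(\mathbf{y}^{k+1}),\mathbf{x}\rangle+h(\mathbf{x})+\langle\boldsymbol{\lambda}^k,\mathcal{A}(\mathbf{x})\rangle+\frac{\beta^{(k)}}{2}\|\mathcal{A}(\mathbf{x})-\mathbf{b}\|^2+\frac{L\theta^{(k)}}{2}\|\mathbf{x}-\mathbf{z}^k\|^2$; $\mathbf{x}^{k+1}=(1-\theta^{(k)})\mathbf{x}^k+\theta^{(k)}\mathbf{z}^{k+1}$; $\boldsymbol{\lambda}^{k+1}=\boldsymbol{\lambda}^k+\beta^{(k)}(\mathcal{A}(\mathbf{z}^{k+1})-\mathbf{b})$; $\theta^{(k+1)}=\frac{-(\theta^{(k)})^2+\sqrt{(\theta^{(k)})^4+4(\theta^{(k)})^2}}{2}$; $\beta^{(k+1)}=1/\theta^{(k+1)}$.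 (In the paper the right-hand side is written $\frac{2}{(K+2)^2}(LD_{\mathbf{x}^*}^2+D_{\boldsymbol{\lambda}^*}^2)$, with the initialization $\mathbf{z}^0=\mathbf{x}^0$ implicitly making $D_{\mathbf{x}^*}=\|\mathbf{x}^0-\mathbf{x}^*\|=\|\mathbf{z}^0-\mathbf{x}^*\|$ and $D_{\boldsymbol{\lambda}^*}=\|\boldsymbol{\lambda}^0-\boldsymbol{\lambda}^*\|$.) *)

(* Defs.v *)
From mathcomp Require Import all_boot.
From Stdlib Require Import Reals.
Set Implicit Arguments.
Unset Strict Implicit.

Local Open Scope R_scope.

Definition vec (n : nat) := 'I_n -> R.

Definition vadd {n} (u v : vec n) : vec n := fun i => u i + v i.
Definition vsub {n} (u v : vec n) : vec n := fun i => u i - v i.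
Definition vscale {n} (a : R) (u : vec n) : vec n := fun i => a * u i.

Definition inner {n} (u v : vec n) : R := \big[Rplus/0]_(i < n) (u i * v i).
Definition norm {n} (u : vec n) : R := sqrt (inner u u).

Definition linear_map {n m} (A : vec n -> vec m) : Prop :=
  (forall u v, forall j, A (vadd u v) j = vadd (A u) (A v) j) /\
  (forall a u, forall j, A (vscale a u) j = vscale a (A u) j).

Definition is_adjoint {n m} (A : vec n -> vec m) (AT : vec m -> vec n) : Prop :=
  forall x y, inner (A x) y = inner x (AT y).

Inductive ER := Fin (r : R) | PInf.

Definition ER_le (a b : ER) : Prop :=
  match a, b with
  | _, PInf => True
  | PInf, Fin _ => False
  | Fin x, Fin y => x <= y
  end.

Definition ER_add (a b : ER) : ER :=
  match a, b with
  | Fin x, Fin y => Fin (x + y)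
  | _, _ => PInf
  end.

(* proper (never -oo by construction; finite somewhere) *)
Definition proper_fun {n} (h : vec n -> ER) : Prop := exists x, h x <> PInf.

Definition convexE {n} (h : vec n -> ER) : Prop :=
  forall x y (t a b : R), 0 <= t <= 1 ->
    ER_le (h x) (Fin a) -> ER_le (h y) (Fin b) ->
    ER_le (h (vadd (vscale t x) (vscale (1 - t) y))) (Fin (t * a + (1 - t) * b)).

Definition convexR {n} (g : vec n -> R) : Prop :=
  forall x y (t : R), 0 <= t <= 1 ->
    g (vadd (vscale t x) (vscale (1 - t) y)) <= t * g x + (1 - t) * g y.

(* lower semicontinuity: h x <= liminf_{y -> x} h y (closed epigraph) *)
Definition lscE {n} (h : vec n -> ER) : Prop :=
  forall x (r : R),
    (forall eps, 0 < eps -> exists y, norm (vsub y x) < eps /\ ER_le (h y) (Fin (r + eps))) ->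
    ER_le (h x) (Fin r).

Definition has_gradient {n} (g : vec n -> R) (dg : vec n -> vec n) : Prop :=
  forall x eps, 0 < eps -> exists delta, 0 < delta /\
    forall d, norm d < delta ->
      Rabs (g (vadd x d) - g x - inner (dg x) d) <= eps * norm d.

Definition lipschitz_grad {n} (dg : vec n -> vec n) (L : R) : Prop :=
  forall x y, norm (vsub (dg x) (dg y)) <= L * norm (vsub x y).

Definition subgrad {n} (F : vec n -> ER) (x v : vec n) : Prop :=
  exists fx, F x = Fin fx /\
    forall y, ER_le (Fin (fx + inner v (vsub y x))) (F y).

Fixpoint theta (k : nat) : R :=
  match k with
  | O => 1
  | S k' => let t := theta k' in (- t ^ 2 + sqrt (t ^ 4 + 4 * t ^ 2)) / 2
  end.

Definition beta (k : nat) : R := 1 / theta k.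

(* Main.v *)
Require Import Defs.
From mathcomp Require Import all_boot.
From Stdlib Require Import Reals Lra Psatz FunctionalExtensionality.
Local Open Scope R_scope.

Lemma vext {n} (u v : vec n) : (forall i, u i = v i) -> u = v.
Proof. move=> H; apply: functional_extensionality; exact H. Qed.

Lemma sum_add {n} (F G : 'I_n -> R) :
  \big[Rplus/0]_(i < n) (F i + G i) = \big[Rplus/0]_(i < n) F i + \big[Rplus/0]_(i < n) G i.
Proof.
apply: (big_rec3 (fun x y z => x = y + z)); first by ring.
by move=> i y1 y2 y3 _ ->; ring.
Qed.

Lemma sum_scale {n} (a : R) (F : 'I_n -> R) :
  \big[Rplus/0]_(i < n) (a * F i) = a * \big[Rplus/0]_(i < n) F i.
Proof.
apply: (big_rec2 (fun x y => x = a * y)); first by ring.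
by move=> i y1 y2 _ ->; ring.
Qed.

Lemma sum_ge0 {n} (F : 'I_n -> R) : (forall i, 0 <= F i) -> 0 <= \big[Rplus/0]_(i < n) F i.
Proof.
move=> H; apply: (big_rec (fun x => 0 <= x)); first lra.
move=> i x _ Hx; have := H i; lra.
Qed.

Lemma sum_ext {n} (F G : 'I_n -> R) : (forall i, F i = G i) ->
  \big[Rplus/0]_(i < n) F i = \big[Rplus/0]_(i < n) G i.
Proof. by move=> H; apply: eq_bigr => i _; apply H. Qed.

Lemma inner_sym {n} (u v : vec n) : inner u v = inner v u.
Proof. rewrite /inner; apply: sum_ext => i; ring. Qed.

Lemma inner_addl {n} (u v w : vec n) : inner (vadd u v) w = inner u w + inner v w.
Proof. rewrite /inner -sum_add; apply: sum_ext => i; rewrite /vadd; ring. Qed.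
Lemma inner_addr {n} (u v w : vec n) : inner w (vadd u v) = inner w u + inner w v.
Proof. rewrite /inner -sum_add; apply: sum_ext => i; rewrite /vadd; ring. Qed.
Lemma inner_scalel {n} a (u w : vec n) : inner (vscale a u) w = a * inner u w.
Proof. rewrite /inner -sum_scale; apply: sum_ext => i; rewrite /vscale; ring. Qed.
Lemma inner_scaler {n} a (u w : vec n) : inner w (vscale a u) = a * inner w u.
Proof. rewrite /inner -sum_scale; apply: sum_ext => i; rewrite /vscale; ring. Qed.
Lemma inner_subl {n} (u v w : vec n) : inner (vsub u v) w = inner u w - inner v w.
Proof.
have ->: vsub u v = vadd u (vscale (-1) v) by apply: vext => i; rewrite /vsub /vadd /vscale; ring.
rewrite inner_addl inner_scalel; ring.
Qed.
Lemma inner_subr {n} (u v w : vec n) : inner w (vsub u v) = inner w u - inner w v.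
Proof. by rewrite inner_sym inner_subl !(inner_sym w). Qed.
Lemma inner_ge0 {n} (u : vec n) : 0 <= inner u u.
Proof. apply: sum_ge0 => i; nra. Qed.

Lemma nsq_sub {n} (u v : vec n) :
  inner (vsub u v) (vsub u v) = inner u u - 2 * inner u v + inner v v.
Proof. rewrite !inner_subl !inner_subr (inner_sym v u); ring. Qed.

Lemma nsq_sym {n} (u v : vec n) : inner (vsub u v) (vsub u v) = inner (vsub v u) (vsub v u).
Proof. rewrite !nsq_sub (inner_sym u v); ring. Qed.

Lemma three_pt {n} (a b c : vec n) :
  2 * inner (vsub a b) (vsub c a) + inner (vsub a b) (vsub a b)
  = inner (vsub b c) (vsub b c) - inner (vsub a c) (vsub a c).
Proof.
rewrite !nsq_sub !inner_subl !inner_subr; rewrite (inner_sym b a) ?(inner_sym c a) ?(inner_sym c b); ring.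
Qed.

Lemma nsq_convex {n} (t : R) (u v : vec n) : 0 <= t <= 1 ->
  inner (vadd (vscale (1 - t) u) (vscale t v)) (vadd (vscale (1 - t) u) (vscale t v))
  <= (1 - t) * inner u u + t * inner v v.
Proof.
move=> Ht.
have := inner_ge0 (vsub u v). rewrite nsq_sub.
rewrite !inner_addl !inner_addr !inner_scalel !inner_scaler (inner_sym v u).
move=> H.
have : 0 <= t * (1 - t) * (inner u u - 2 * inner u v + inner v v) by apply: Rmult_le_pos; nra.
nra.
Qed.

Lemma nsq_scale {n} a (u : vec n) : inner (vscale a u) (vscale a u) = a ^ 2 * inner u u.
Proof. rewrite inner_scalel inner_scaler; ring. Qed.

Lemma norm_scale {n} a (u : vec n) : norm (vscale a u) = Rabs a * norm u.
Proof.
rewrite /norm nsq_scale -sqrt_Rsqr_abs -sqrt_mult; first (congr sqrt; rewrite /Rsqr; ring).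
- apply: Rle_0_sqr.
- apply: inner_ge0.
Qed.

Lemma norm_ge0 {n} (u : vec n) : 0 <= norm u.
Proof. apply: sqrt_pos. Qed.

Lemma norm_sq {n} (u : vec n) : norm u * norm u = inner u u.
Proof. apply: sqrt_sqrt; apply: inner_ge0. Qed.

Lemma nsq_add {n} s (p q : vec n) :
  inner (vadd p (vscale s q)) (vadd p (vscale s q)) = inner p p + 2 * s * inner p q + s ^ 2 * inner q q.
Proof. rewrite !inner_addl !inner_addr !inner_scalel !inner_scaler (inner_sym q p); ring. Qed.

Lemma lin_add {n m} (A : vec n -> vec m) u v : linear_map A -> A (vadd u v) = vadd (A u) (A v).
Proof. by case=> H1 _; apply: vext => j; apply: H1. Qed.
Lemma lin_scale {n m} (A : vec n -> vec m) a u : linear_map A -> A (vscale a u) = vscale a (A u).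
Proof. by case=> _ H2; apply: vext => j; apply: H2. Qed.
Lemma lin_sub {n m} (A : vec n -> vec m) u v : linear_map A -> A (vsub u v) = vsub (A u) (A v).
Proof.
move=> HA.
have ->: vsub u v = vadd u (vscale (-1) v) by apply: vext => i; rewrite /vsub /vadd /vscale; ring.
rewrite lin_add // lin_scale //; apply: vext => i; rewrite /vsub /vadd /vscale; ring.
Qed.

Lemma lim0 (a c : R) : (forall t, 0 < t <= 1 -> a <= t * c) -> a <= 0.
Proof.
move=> H; apply: Rnot_lt_le => Ha.
set t := Rmin 1 (a / (2 * (Rabs c + 1))).
have Hc := Rabs_pos c.
have Hq : 0 < a / (2 * (Rabs c + 1)) by apply: Rdiv_lt_0_compat; lra.
have Ht : 0 < t <= 1 by split; [apply: Rmin_glb_lt; lra | apply: Rmin_l].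
have H1 := H t Ht.
have H2 : t <= a / (2 * (Rabs c + 1)) by apply: Rmin_r.
have H3 : t * c <= t * Rabs c by apply: Rmult_le_compat_l; [lra | apply: Rle_abs].
have H4 : t * (2 * (Rabs c + 1)) <= a.
  have := Rmult_le_compat_r (2 * (Rabs c + 1)) _ _ ltac:(lra) H2.
  by rewrite /Rdiv Rmult_assoc Rinv_l; [lra| lra].
nra.
Qed.

Lemma Rabs_le_between x b : Rabs x <= b -> - b <= x <= b.
Proof. move=> H; have := Rle_abs x; have := Rle_abs (- x); rewrite Rabs_Ropp; lra. Qed.

Lemma small_step (N delta : R) : 0 <= N -> 0 < delta ->
  exists s, 0 < s <= 1 /\ s * N < delta.
Proof.
move=> HN Hd.
exists (Rmin 1 (delta / (2 * (N + 1)))).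
have Hq : 0 < delta / (2 * (N + 1)) by apply: Rdiv_lt_0_compat; lra.
have H2 : Rmin 1 (delta / (2 * (N + 1))) <= delta / (2 * (N + 1)) by apply: Rmin_r.
split; first by split; [apply: Rmin_glb_lt; lra | apply: Rmin_l].
have H4 : Rmin 1 (delta / (2 * (N + 1))) * (2 * (N + 1)) <= delta.
  have := Rmult_le_compat_r (2 * (N + 1)) _ _ ltac:(lra) H2.
  by rewrite /Rdiv Rmult_assoc Rinv_l; [lra| lra].
have : 0 < Rmin 1 (delta / (2 * (N + 1))) by apply: Rmin_glb_lt; lra.
nra.
Qed.

Lemma grad_ineq {n} (g : vec n -> R) dg : convexR g -> has_gradient g dg ->
  forall y u, g y + inner (dg y) (vsub u y) <= g u.
Proof.
move=> Hc Hg y u.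
set d := vsub u y.
suff: inner (dg y) d - (g u - g y) <= 0 by lra.
apply: (lim0 _ (norm d)) => eps Heps.
have [delta [Hdel Hd]] := Hg y eps ltac:(lra).
have [s [Hs HsN]] := small_step (norm d) delta (norm_ge0 d) Hdel.
have Hn : norm (vscale s d) < delta by rewrite norm_scale Rabs_pos_eq; lra.
have := Hd _ Hn.
rewrite norm_scale (Rabs_pos_eq s); last lra.
rewrite inner_scaler.
have Hcv := Hc u y s ltac:(lra).
have -> : vadd y (vscale s d) = vadd (vscale s u) (vscale (1 - s) y).
  apply: vext => i; rewrite /vadd /vscale /d /vsub; ring.
move=> /Rabs_le_between; case=> H1 H2.
have Hnd := norm_ge0 d.
have : s * (inner (dg y) d - (g u - g y)) <= s * (eps * norm d) by nra.
move=> H; apply: Rmult_le_reg_l (proj1 Hs) H.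
Qed.

Lemma deriv_dir {n} (g : vec n -> R) dg y d : has_gradient g dg ->
  forall t, derivable_pt_lim (fun t => g (vadd y (vscale t d))) t
                             (inner (dg (vadd y (vscale t d))) d).
Proof.
move=> Hg t eps Heps.
set N := norm d.
have HN : 0 <= N := norm_ge0 d.
set p := vadd y (vscale t d).
have He' : 0 < eps / (2 * (N + 1)) by apply: Rdiv_lt_0_compat; lra.
have [delta [Hdel Hd]] := Hg p _ He'.
have Hdp : 0 < delta / (N + 1) by apply: Rdiv_lt_0_compat; lra.
exists (mkposreal _ Hdp) => h Hh0 /= Hh.
have Hah : 0 < Rabs h by apply: Rabs_pos_lt.
have HhN : Rabs h * N < delta.
  have : Rabs h * (N + 1) < delta.
    have := Rmult_lt_compat_r (N + 1) _ _ ltac:(lra) Hh.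
    by rewrite /Rdiv Rmult_assoc Rinv_l; [lra | lra].
  nra.
have Hn : norm (vscale h d) < delta by rewrite norm_scale.
have := Hd _ Hn.
have -> : vadd p (vscale h d) = vadd y (vscale (t + h) d).
  apply: vext => i; rewrite /p /vadd /vscale; ring.
rewrite inner_scaler norm_scale -/N.
move=> H.
have -> : (g (vadd y (vscale (t + h) d)) - g p) / h - inner (dg p) d
        = (g (vadd y (vscale (t + h) d)) - g p - h * inner (dg p) d) / h.
  by field.
rewrite /Rdiv Rabs_mult Rabs_inv -/(Rdiv _ (Rabs h)).
apply: (Rle_lt_trans _ (eps / (2 * (N + 1)) * N)).
- apply: (Rmult_le_reg_r (Rabs h)) => //.
  rewrite /Rdiv Rmult_assoc Rinv_l; last lra.
  rewrite Rmult_1_r. move: H. rewrite -/(Rdiv eps (2 * (N + 1))). nra.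
- have -> : eps / (2 * (N + 1)) * N = eps * (N / (2 * (N + 1))) by rewrite /Rdiv; ring.
  have : N / (2 * (N + 1)) < 1.
    apply: (Rmult_lt_reg_r (2 * (N + 1))); first lra.
    rewrite /Rdiv Rmult_assoc Rinv_l; lra.
  nra.
Qed.

Lemma descent {n} (g : vec n -> R) dg L : 0 < L -> has_gradient g dg -> lipschitz_grad dg L ->
  forall y d, g (vadd y d) <= g y + inner (dg y) d + L / 2 * inner d d.
Proof.
move=> HL Hg Hl y d.
set G0 := inner (dg y) d. set dd := inner d d.
set phi := fun t => g (vadd y (vscale t d)).
set psi := fun t => phi t - (t * G0 + L / 2 * dd * t ^ 2).
set psi' := fun t => inner (dg (vadd y (vscale t d))) d - (G0 + L * dd * t).
have Hder : forall c, 0 <= c <= 1 -> derivable_pt_lim psi c (psi' c).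
  move=> c _; rewrite /psi /psi'.
  apply: derivable_pt_lim_minus; first exact: deriv_dir.
  have -> : G0 + L * dd * c = G0 * 1 + L / 2 * dd * (INR 2 * c ^ (Nat.pred 2)) by simpl; field.
  apply: (derivable_pt_lim_plus (fun t => t * G0) (fun t => L / 2 * dd * t ^ 2)).
  + have -> : (fun t => t * G0) = mult_real_fct G0 id.
      by apply: functional_extensionality => x; rewrite /mult_real_fct /id; ring.
    apply: derivable_pt_lim_scal; apply: derivable_pt_lim_id.
  + apply: (derivable_pt_lim_scal (fun t => t ^ 2)); apply: derivable_pt_lim_pow.
have [c [Hc Hc01]] := MVT_cor2 psi psi' 0 1 ltac:(lra) Hder.
have Hpsi : psi' c <= 0.
  rewrite /psi'.
  set a := vsub (dg (vadd y (vscale c d))) (dg y).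
  have Ha : inner (dg (vadd y (vscale c d))) d - G0 = inner a d by rewrite /a inner_subl.
  have Hn : norm a <= L * (c * norm d).
    have := Hl (vadd y (vscale c d)) y.
    have -> : vsub (vadd y (vscale c d)) y = vscale c d.
      by apply: vext => i; rewrite /vsub /vadd /vscale; ring.
    rewrite norm_scale (Rabs_pos_eq c); [move=> H; rewrite /a; lra | lra].
  have Haa : inner a a <= (L * c) ^ 2 * dd.
    rewrite -norm_sq /dd -norm_sq.
    have := norm_ge0 a. have := norm_ge0 d. nra.
  have H0 := inner_ge0 (vsub a (vscale (L * c) d)).
  rewrite nsq_sub inner_scaler nsq_scale -/dd in H0.
  have Hpos : 0 < L * c by nra.
  have : inner a d <= L * c * dd by nra.
  lra.
have Hp1 : psi 1 = g (vadd y d) - (G0 + L / 2 * dd).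
  rewrite /psi /phi.
  have -> : vscale 1 d = d by apply: vext => i; rewrite /vscale; ring.
  ring.
have Hp0 : psi 0 = g y.
  rewrite /psi /phi.
  have -> : vadd y (vscale 0 d) = y by apply: vext => i; rewrite /vadd /vscale; ring.
  ring.
nra.
Qed.

Lemma theta_step (t : R) : 0 < t <= 1 ->
  let s := (- t ^ 2 + sqrt (t ^ 4 + 4 * t ^ 2)) / 2 in
  0 < s <= 1 /\ s ^ 2 = (1 - s) * t ^ 2 /\ s * (2 + t) <= 2 * t.
Proof.
move=> Ht s.
have Hr0 : 0 <= t ^ 4 + 4 * t ^ 2 by nra.
set r := sqrt (t ^ 4 + 4 * t ^ 2).
have Hr : r * r = t ^ 4 + 4 * t ^ 2 by apply: sqrt_sqrt.
have Hrp : 0 <= r by apply: sqrt_pos.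
have Hrt : t ^ 2 < r by nra.
have Hr2 : r <= t ^ 2 + 2 by nra.
have Hs : s = (- t ^ 2 + r) / 2 by [].
have Hsp : 0 < s by rewrite Hs; lra.
have Hs1 : s <= 1 by rewrite Hs; lra.
have Heq : s ^ 2 = (1 - s) * t ^ 2 by rewrite Hs; nra.
split; first by split.
split; first by [].
set u := s * (2 + t).
have Hid : (2 * t - u) * (2 * t + u + t ^ 2 * (2 + t)) = t ^ 4.
  rewrite /u; nra.
have Hpos : 0 < 2 * t + u + t ^ 2 * (2 + t) by rewrite /u; nra.
have Ht4 : 0 < t ^ 4 by apply: pow_lt; lra.
clearbody u; nra.
Qed.

Lemma theta_props k : 0 < theta k <= 1 /\ theta k * (INR k + 2) <= 2.
Proof.
elim: k => [|k [Ht Hb]]; first (simpl; lra).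
rewrite S_INR; cbn [theta].
have [[Hs1 Hs2] [_ Hs3]] := theta_step (theta k) Ht.
split; first by split.
set s := (- theta k ^ 2 + sqrt (theta k ^ 4 + 4 * theta k ^ 2)) / 2 in Hs1 Hs2 Hs3 *.
have : s * (INR k + 1 + 2) * (2 + theta k) <= 2 * (2 + theta k).
  have HI : 0 <= INR k := pos_INR k.
  nra.
move=> H. have Hp : 0 < 2 + theta k by lra.
nra.
Qed.

Lemma theta_rec k : theta (S k) ^ 2 = (1 - theta (S k)) * theta k ^ 2.
Proof.
have [Ht _] := theta_props k.
have [_ [H _]] := theta_step (theta k) Ht.
exact H.
Qed.

Definition Phi {n m} (G : vec n) (lam : vec m) (A : vec n -> vec m) (b : vec m)
  (B c : R) (zk v : vec n) : R :=
  inner G v + inner lam (A v) + B / 2 * inner (vsub (A v) b) (vsub (A v) b)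
  + c / 2 * inner (vsub v zk) (vsub v zk).

Lemma opt3 {n m} (h : vec n -> ER) G lam (A : vec n -> vec m) b B c zk u w hu hw :
  convexE h -> linear_map A ->
  (forall w, ER_le (ER_add (Fin (Phi G lam A b B c zk u)) (h u))
                   (ER_add (Fin (Phi G lam A b B c zk w)) (h w))) ->
  h u = Fin hu -> h w = Fin hw ->
  0 <= inner G (vsub w u) + inner (vadd lam (vscale B (vsub (A u) b))) (A (vsub w u))
       + c * inner (vsub u zk) (vsub w u) + hw - hu.
Proof.
move=> Hc HA Hopt Hu Hw.
set d := vsub w u.
set Bt := inner G d + inner (vadd lam (vscale B (vsub (A u) b))) (A d)
       + c * inner (vsub u zk) d + hw - hu.
set Ct := B * inner (A d) (A d) + c * inner d d.
suff : - Bt <= 0 by lra.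
apply: (lim0 _ (Ct / 2)) => s Hs.
have Hws : vadd (vscale s w) (vscale (1 - s) u) = vadd u (vscale s d).
  by apply: vext => i; rewrite /vadd /vscale /d /vsub; ring.
have Hcv := Hc w u s hw hu ltac:(lra).
rewrite Hu Hw /= Hws in Hcv.
have := Hopt (vadd u (vscale s d)).
rewrite Hu.
case E : (h (vadd u (vscale s d))) => [v|]; rewrite E /= in Hcv; last by case: (Hcv (Rle_refl _) (Rle_refl _)).
move=> Hle /=; have {}Hcv := Hcv (Rle_refl _) (Rle_refl _).
have HAd : A (vadd u (vscale s d)) = vadd (A u) (vscale s (A d)) by rewrite lin_add // lin_scale.
have Hexp : Phi G lam A b B c zk (vadd u (vscale s d))
   = Phi G lam A b B c zk u + s * (inner G d + inner (vadd lam (vscale B (vsub (A u) b))) (A d)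
       + c * inner (vsub u zk) d) + s ^ 2 / 2 * Ct.
  rewrite /Phi HAd.
  have -> : vsub (vadd (A u) (vscale s (A d))) b = vadd (vsub (A u) b) (vscale s (A d)).
    by apply: vext => i; rewrite /vadd /vsub /vscale; ring.
  have -> : vsub (vadd u (vscale s d)) zk = vadd (vsub u zk) (vscale s d).
    by apply: vext => i; rewrite /vadd /vsub /vscale; ring.
  rewrite !nsq_add inner_addr inner_scaler inner_addr inner_scaler inner_addl inner_scalel /Ct.
  field.
rewrite Hexp in Hle.
simpl in Hle. have : 0 <= s * Bt + s ^ 2 / 2 * Ct by rewrite /Bt; clearbody d Ct; nra.
move=> H.
have H2 : s * (- Bt) <= s * (s * (Ct / 2)) by nra.
exact: (Rmult_le_reg_l s _ _ (proj1 Hs) H2).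
Qed.

Definition rr {n m} (g : vec n -> R) (A : vec n -> vec m) b xs hs lams (v : vec n) (hv : R) : R :=
  g v + hv - (g xs + hs) + inner lams (vsub (A v) b)
  + 1 / 2 * inner (vsub (A v) b) (vsub (A v) b).

Lemma step {n m} (g : vec n -> R) dg (h : vec n -> ER) L (A : vec n -> vec m) b xs lams t
  (xk zk z' x' yv : vec n) (lam lam' : vec m) (a hz' hx' hs : R) :
  0 < L -> convexR g -> has_gradient g dg -> lipschitz_grad dg L ->
  convexE h -> linear_map A -> A xs = b -> 0 < t <= 1 ->
  yv = vadd (vscale (1 - t) xk) (vscale t zk) ->
  x' = vadd (vscale (1 - t) xk) (vscale t z') ->
  lam' = vadd lam (vscale (1 / t) (vsub (A z') b)) ->
  (forall w, ER_le (ER_add (Fin (Phi (dg yv) lam A b (1 / t) (L * t) zk z')) (h z'))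
                   (ER_add (Fin (Phi (dg yv) lam A b (1 / t) (L * t) zk w)) (h w))) ->
  h z' = Fin hz' -> h xs = Fin hs -> hx' <= (1 - t) * a + t * hz' ->
  rr g A b xs hs lams x' hx' <= (1 - t) * rr g A b xs hs lams xk a
    + t ^ 2 / 2 * (L * inner (vsub zk xs) (vsub zk xs) + inner (vsub lam lams) (vsub lam lams)
                   - L * inner (vsub z' xs) (vsub z' xs) - inner (vsub lam' lams) (vsub lam' lams)).
Proof.
move=> HL Hgc Hgg Hgl Hhc HA Hxs Ht Hy Hx Hl Hopt Hz Hs Hhx.
set G := dg yv.
set e := vsub (A z') b.
have Hdd : vsub x' yv = vscale t (vsub z' zk).
  by rewrite Hx Hy; apply: vext => i; rewrite /vsub /vadd /vscale; ring.
have F1 := descent g dg L HL Hgg Hgl yv (vsub x' yv).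
rewrite (_ : vadd yv (vsub x' yv) = x') in F1; last by apply: vext => i; rewrite /vadd /vsub; ring.
rewrite {2 3}Hdd nsq_scale in F1.
have I1 : inner G (vsub x' yv) = (1 - t) * inner G (vsub xk yv) + t * inner G (vsub z' yv).
  have -> : vsub x' yv = vadd (vscale (1 - t) (vsub xk yv)) (vscale t (vsub z' yv)).
    by rewrite Hx; apply: vext => i; rewrite /vsub /vadd /vscale; ring.
  by rewrite inner_addr !inner_scaler.
have I2 : inner G (vsub z' yv) = inner G (vsub xs yv) - inner G (vsub xs z').
  rewrite -inner_subr; congr inner; apply: vext => i; rewrite /vsub; ring.
have F2 := grad_ineq g dg Hgc Hgg yv xk.
have F3 := grad_ineq g dg Hgc Hgg yv xs.
have F4 := opt3 h G lam A b (1 / t) (L * t) zk z' xs hz' hs Hhc HA Hopt Hz Hs.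
rewrite -Hl lin_sub // Hxs in F4.
have I4 : inner lam' (vsub b (A z')) = - inner lam' e.
  have -> : vsub b (A z') = vscale (-1) e by apply: vext => i; rewrite /e /vsub /vscale; ring.
  rewrite inner_scaler; ring.
rewrite I4 in F4.
have I5 : vsub (A x') b = vadd (vscale (1 - t) (vsub (A xk) b)) (vscale t e).
  rewrite Hx (lin_add A) // !(lin_scale A) //.
  by apply: vext => i; rewrite /e /vsub /vadd /vscale; ring.
have Q5 := nsq_convex t (vsub (A xk) b) e ltac:(lra).
rewrite -I5 in Q5.
have L5 : inner lams (vsub (A x') b) = (1 - t) * inner lams (vsub (A xk) b) + t * inner lams e.
  by rewrite I5 inner_addr !inner_scaler.
have I6 := three_pt z' zk xs.
have I7 := three_pt lam' lam lams.
have He : e = vscale t (vsub lam' lam).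
  rewrite Hl; apply: vext => i; rewrite /e /vsub /vadd /vscale; field; lra.
have Hl2 : vsub lam' lam = vscale (1 / t) e.
  rewrite Hl; apply: vext => i; rewrite /e /vsub /vadd /vscale; ring.
have I8 : inner lams e - inner lam' e = t * inner (vsub lam' lam) (vsub lams lam').
  by rewrite -inner_subl He inner_scaler inner_sym.
have I9 : t ^ 2 * inner (vsub lam' lam) (vsub lam' lam) = inner e e.
  rewrite Hl2 nsq_scale; field; lra.
have Ee := inner_ge0 e.
rewrite /rr L5.
rewrite -/G in F1 F2 F3.
have F2' : (1 - t) * (g yv + inner G (vsub xk yv)) <= (1 - t) * g xk by apply: Rmult_le_compat_l; lra.
have F3' : t * (g yv + inner G (vsub xs yv)) <= t * g xs by apply: Rmult_le_compat_l; lra.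
have F4' : 0 <= t * (inner G (vsub xs z') + - inner lam' e + L * t * inner (vsub z' zk) (vsub xs z') + hs - hz')
  by apply: Rmult_le_pos; lra.
have T1 : t * (t * inner (vsub lam' lam) (vsub lams lam')) = t ^ 2 * inner (vsub lam' lam) (vsub lams lam') by ring.
have Qt : t * inner e e <= inner e e by nra.
nra.
Qed.

Theorem theorem1
  (n m : nat) (g : vec n -> R) (dg : vec n -> vec n) (h : vec n -> ER)
  (L : R) (A : vec n -> vec m) (AT : vec m -> vec n) (b : vec m)
  (HL : 0 < L)
  (Hg_conv : convexR g) (Hg_grad : has_gradient g dg) (Hg_lip : lipschitz_grad dg L)
  (Hh_proper : proper_fun h) (Hh_conv : convexE h) (Hh_lsc : lscE h)
  (HA : linear_map A) (HAT : is_adjoint A AT)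
  (xs : vec n) (lams : vec m)
  (Hfeas : forall j, A xs j = b j)
  (Hsaddle : subgrad (fun x => ER_add (Fin (g x)) (h x)) xs
                     (vscale (-1) (AT lams)))
  (x z y : nat -> vec n) (lam : nat -> vec m)
  (Hy : forall k i, y (S k) i = (1 - theta k) * x k i + theta k * z k i)
  (Hz : forall k (w : vec n),
      ER_le
        (ER_add (Fin (inner (dg (y (S k))) (z (S k)) + inner (lam k) (A (z (S k)))
                      + beta k / 2 * inner (vsub (A (z (S k))) b) (vsub (A (z (S k))) b)
                      + L * theta k / 2 * inner (vsub (z (S k)) (z k)) (vsub (z (S k)) (z k))))
                (h (z (S k))))
        (ER_add (Fin (inner (dg (y (S k))) w + inner (lam k) (A w)
                      + beta k / 2 * inner (vsub (A w) b) (vsub (A w) b)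
                      + L * theta k / 2 * inner (vsub w (z k)) (vsub w (z k))))
                (h w)))
  (Hx : forall k i, x (S k) i = (1 - theta k) * x k i + theta k * z (S k) i)
  (Hlam : forall k j, lam (S k) j = lam k j + beta k * (A (z (S k)) j - b j))
  (K : nat) (HK : (0 < K)%nat) :
  exists hK hs,
    h (x (S K)) = Fin hK /\ h xs = Fin hs /\
    (g (x (S K)) + hK) - (g xs + hs)
      + inner lams (vsub (A (x (S K))) b)
      + 1 / 2 * inner (vsub (A (x (S K))) b) (vsub (A (x (S K))) b)
    <= 2 / (INR K + 2) ^ 2
       * (L * inner (vsub (z O) xs) (vsub (z O) xs)
          + inner (vsub (lam O) lams) (vsub (lam O) lams)).
Proof.
have [hs Hhs] : exists hs, h xs = Fin hs.
  case: Hsaddle => fx [Hfx _].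
  move: Hfx; case: (h xs) => [r|] //= [Hr].
  by exists r.
have Hxs : A xs = b by apply: vext.
have Hhz : forall k, exists v, h (z (S k)) = Fin v.
  move=> k; case: Hh_proper => w0 Hw0.
  case E : (h (z (S k))) => [v|]; first by exists v.
  have := Hz k w0; rewrite E.
  by case: (h w0) Hw0 => [c|] //=.
set E := fun j => L * inner (vsub (z j) xs) (vsub (z j) xs)
                  + inner (vsub (lam j) lams) (vsub (lam j) lams).
have STEP : forall k a hz' hx', h (z (S k)) = Fin hz' -> hx' <= (1 - theta k) * a + theta k * hz' ->
  rr g A b xs hs lams (x (S k)) hx' <= (1 - theta k) * rr g A b xs hs lams (x k) a
    + theta k ^ 2 / 2 * (E k - E (S k)).
  move=> k a hz' hx' Hz' Hle.
  have [Ht _] := theta_props k.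
  have := step g dg h L A b xs lams (theta k) (x k) (z k) (z (S k)) (x (S k)) (y (S k))
           (lam k) (lam (S k)) a hz' hx' hs HL Hg_conv Hg_grad Hg_lip Hh_conv HA Hxs Ht.
  move=> H. rewrite /E.
  have := H ltac:(by apply: vext => i; rewrite Hy /vadd /vscale)
            ltac:(by apply: vext => i; rewrite Hx /vadd /vscale)
            ltac:(by apply: vext => j; rewrite Hlam /vadd /vscale /vsub /beta)
            (Hz k) Hz' Hhs Hle.
  lra.
have CLAIM : forall k, exists v, h (x (S k)) = Fin v /\
    rr g A b xs hs lams (x (S k)) v <= theta k ^ 2 * (E 0%nat / 2 - E (S k) / 2).
  elim=> [|k [v [Hv IH]]].
  - have [w Hw] := Hhz 0%nat.
    have Hx1 : x 1%nat = z 1%nat.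
      by apply: vext => i; rewrite Hx /=; ring.
    exists w; split; first by rewrite Hx1.
    have := STEP 0%nat 0 w w Hw ltac:(simpl; lra).
    rewrite /= ; lra.
  - have [w Hw] := Hhz (S k).
    have [[Ht0 Ht1] _] := theta_props (S k).
    have Hcv := Hh_conv (z (S (S k))) (x (S k)) (theta (S k)) w v ltac:(lra).
    rewrite Hw Hv in Hcv; cbv [ER_le] in Hcv.
    have {}Hcv := Hcv (Rle_refl _) (Rle_refl _).
    rewrite (_ : vadd (vscale (theta (S k)) (z (S (S k)))) (vscale (1 - theta (S k)) (x (S k)))
                 = x (S (S k))) in Hcv; last first.
      by apply: vext => i; rewrite Hx /vadd /vscale; ring.
    move: Hcv; case: (h (x (S (S k)))) => [hx|] Hcv; cbv [ER_le] in Hcv; last by case: Hcv.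
    exists hx; split; first by [].
    have := STEP (S k) v w hx Hw ltac:(lra).
    have Hr := theta_rec k.
    have [[Hk0 Hk1] _] := theta_props k.
    have : (1 - theta (S k)) * rr g A b xs hs lams (x (S k)) v
           <= (1 - theta (S k)) * (theta k ^ 2 * (E 0%nat / 2 - E (S k) / 2)).
      apply: Rmult_le_compat_l; lra.
    have Heq : (1 - theta (S k)) * (theta k ^ 2 * (E 0%nat / 2 - E (S k) / 2)) = theta (S k) ^ 2 * (E 0%nat / 2 - E (S k) / 2) by rewrite Hr; ring.
    lra.
have [v [Hv Hr]] := CLAIM K.
exists v, hs; split; first by [].
split; first by [].
have HE0 : 0 <= E 0%nat.
  rewrite /E; have := inner_ge0 (vsub (z 0%nat) xs); have := inner_ge0 (vsub (lam 0%nat) lams); nra.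
have HE1 : 0 <= E (S K).
  rewrite /E; have := inner_ge0 (vsub (z (S K)) xs); have := inner_ge0 (vsub (lam (S K)) lams); nra.
have [[Ht0 Ht1] Hb] := theta_props K.
have HK2 : 0 < INR K + 2 by have := pos_INR K; lra.
have Hq : 2 / (INR K + 2) ^ 2 = (2 / (INR K + 2)) ^ 2 / 2 by field; lra.
have Hth : theta K <= 2 / (INR K + 2).
  apply: (Rmult_le_reg_r (INR K + 2)) => //.
  rewrite /Rdiv Rmult_assoc Rinv_l; lra.
have Hth2 : theta K ^ 2 <= (2 / (INR K + 2)) ^ 2 by nra.
move: Hr; rewrite /rr -/(E 0%nat) => Hr.
rewrite Hq.
change (L * inner (vsub (z 0%nat) xs) (vsub (z 0%nat) xs) +
   inner (vsub (lam 0%nat) lams) (vsub (lam 0%nat) lams)) with (E 0%nat).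
nra.
Qed.
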